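(* Let $Q\in S^2_0(\mathbb R^4)$ and $a,b\in\mathbb R$, and define \[R=-(Q^3)_0+\tfrac{a-b}{2}(Q^2)_0+\big(ab+\tfrac12\operatorname{tr}(Q^2)\big)Q,\qquad 4r=\det Q+\tfrac{a-b}{6}\operatorname{tr}(Q^3)+\tfrac{ab}{2}\operatorname{tr}(Q^2)+(ab)^2.\] If $R=0$, then $r\geqslant0$.
   Context: $S^2_0(\mathbb R^4)$ is the space of real symmetric trace-free $4\times4$ matrices; $X_0=X-\frac14(\operatorname{tr}X)I$ denotes the trace-free part. *)

(* Defs.v *)
From HB Require Import structures.
From mathcomp Require Import all_boot all_order all_algebra.
Set Implicit Arguments. Unset Strict Implicit. Unset Printing Implicit Defensive.
Import Order.TTheory GRing.Theory Num.Theory.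
Local Open Scope ring_scope.

Definition tf (F : fieldType) (X : 'M[F]_4) : 'M[F]_4 :=
  X - ((\tr X) / 4%:R)%:M.

Definition sym_tracefree (F : fieldType) (Q : 'M[F]_4) : Prop :=
  Q^T = Q /\ \tr Q = 0.

Definition Rmat (F : fieldType) (Q : 'M[F]_4) (a b : F) : 'M[F]_4 :=
  - tf (Q ^+ 3) + ((a - b) / 2%:R) *: tf (Q ^+ 2)
  + (a * b + (\tr (Q ^+ 2)) / 2%:R) *: Q.

Definition rval (F : fieldType) (Q : 'M[F]_4) (a b : F) : F :=
  (\det Q + (a - b) / 6%:R * \tr (Q ^+ 3) + (a * b) / 2%:R * \tr (Q ^+ 2)
   + (a * b) ^+ 2) / 4%:R.

(* Main.v *)
Require Import Defs.
From HB Require Import structures.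
From mathcomp Require Import all_boot all_order all_algebra.
From mathcomp Require Import ring.
Import Order.TTheory GRing.Theory Num.Theory.
From mathcomp Require Import complex spectral sesquilinear.
Local Open Scope ring_scope.
Section Core.
Variable K : numFieldType.

Definition qf (c sg l u : K) := l^+2 + l*u + u^+2 - c*(l+u) - sg.

Lemma mul2_eq0 (x : K) : 2%:R * x = 0 -> x = 0.
Proof. by move/eqP; rewrite mulf_eq0 pnatr_eq0 /= => /eqP. Qed.

Lemma core (al be ga c s t2 t3 E : K) :
  2%:R*al + be + ga = 0 ->
  t2 = 2%:R*al^+2 + be^+2 + ga^+2 ->
  t3 = 2%:R*al^+3 + be^+3 + ga^+3 ->
  E = al*al*be*ga + c/3%:R*t3 + s/2%:R*t2 + s^+2 ->
  (al = be \/ qf c (s + t2/2%:R) al be = 0) ->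
  (al = ga \/ qf c (s + t2/2%:R) al ga = 0) ->
  (be = ga \/ qf c (s + t2/2%:R) be ga = 0) ->
  E = 0 \/ E = s^+2 \/ E = (2%:R*al*(al+c))^+2.
Proof.
move=> hsum ht2 ht3 hE hab hag hbg.
have h2 : (2%:R : K) != 0 by rewrite pnatr_eq0.
have h3 : (3%:R : K) != 0 by rewrite pnatr_eq0.
have hga : ga = - 2%:R*al - be.
  by rewrite -[ga]subr0 -hsum; ring.
have hs : s = (s + t2/2%:R) - t2/2%:R by ring.
move: (s + t2/2%:R) hs hab hag hbg => sg hs hab hag hbg.
rewrite /qf in hab hag hbg.
subst ga.
have [ebg|nbg] := eqVneq be (- 2%:R*al - be).
  have hb : be = - al.
    apply/eqP; rewrite -subr_eq0; apply/eqP; apply: mul2_eq0.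
    have -> : 2%:R * (be - - al) = be - (- 2%:R*al - be) by ring.
    by rewrite -ebg subrr.
  have [eab|nab] := eqVneq al be.
    have ha : al = 0.
      apply: mul2_eq0; have -> : 2%:R * al = (al - be) + (be - - al) by ring.
      by rewrite {1}eab subrr add0r {1}hb subrr.
    right; left; rewrite hE ht3 ht2 hb ha; field; done.
  case: hab => [/eqP|hab]; first by rewrite (negbTE nab).
  left; rewrite hE hs ht3 ht2.
  have hsg : sg = al^+2 + al*be + be^+2 - c*(al+be) by rewrite -[sg]add0r -hab; ring.
  rewrite hsg hb; field; done.
case: hbg => [/eqP|hbg]; first by rewrite (negbTE nbg).
have [eab|nab] := eqVneq al be.
  case: hag => [eag|hag].
    by move: nbg; rewrite -eag -eab eqxx.
  right; right; rewrite hE hs ht3 ht2.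
  have hsg : sg = al^+2 + al*(- 2%:R*al - be) + (- 2%:R*al - be)^+2 - c*(al+(- 2%:R*al - be)) by rewrite -[sg]add0r -hag; ring.
  rewrite hsg -eab; field; done.
have [eag|nag] := eqVneq al (- 2%:R*al - be).
  case: hab => [eab|hab]; first by move: nab; rewrite eab eqxx.
  right; right; rewrite hE hs ht3 ht2.
  have hsg : sg = al^+2 + al*be + be^+2 - c*(al+be) by rewrite -[sg]add0r -hab; ring.
  have hb : be = - 3%:R * al.
    rewrite -[be]subr0; have -> : 0 = al - (- 2%:R*al - be) by rewrite -eag subrr.
    ring.
  rewrite hsg hb; field; done.
case: hab => [/eqP|hab]; first by rewrite (negbTE nab).
case: hag => [/eqP|hag]; first by rewrite (negbTE nag).
have hc : c = - al.
  have : (be - (- 2%:R*al - be)) * (al + be + (- 2%:R*al - be) - c) = 0.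
    by rewrite -[RHS](subrr 0) -{1}hab -hag; ring.
  move/eqP; rewrite mulf_eq0 subr_eq0 (negbTE nbg) /= subr_eq0 => /eqP <-; ring.
left; rewrite hE hs ht3 ht2.
have hsg : sg = al^+2 + al*be + be^+2 - c*(al+be) by rewrite -[sg]add0r -hab; ring.
rewrite hsg hc; field; done.
Qed.


Definition ev (a b t2 t3 l : K) :=
  - (l^+3 - t3/4%:R) + (a - b)/2%:R * (l^+2 - t2/4%:R) + (a*b + t2/2%:R) * l.

Lemma pair_ev a b t2 t3 l u : ev a b t2 t3 l = 0 -> ev a b t2 t3 u = 0 ->
  l = u \/ qf ((a-b)/2%:R) (a*b + t2/2%:R) l u = 0.
Proof.
move=> hl hu.
have : (l - u) * qf ((a-b)/2%:R) (a*b + t2/2%:R) l u = ev a b t2 t3 u - ev a b t2 t3 l.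
  rewrite /ev /qf; ring.
rewrite hl hu subrr => /eqP; rewrite mulf_eq0 subr_eq0 => /orP [/eqP->|/eqP->]; by [left|right].
Qed.

Lemma core4 (al be ga a b t2 t3 E : K) :
  2%:R*al + be + ga = 0 ->
  t2 = 2%:R*al^+2 + be^+2 + ga^+2 ->
  t3 = 2%:R*al^+3 + be^+3 + ga^+3 ->
  E = al*al*be*ga + (a-b)/6%:R*t3 + (a*b)/2%:R*t2 + (a*b)^+2 ->
  ev a b t2 t3 al = 0 -> ev a b t2 t3 be = 0 -> ev a b t2 t3 ga = 0 ->
  E = 0 \/ E = (a*b)^+2 \/ E = (2%:R*al*(al+(a-b)/2%:R))^+2.
Proof.
move=> hs h2 h3 hE ea eb eg.
apply: (@core al be ga ((a-b)/2%:R) (a*b) t2 t3 E hs h2 h3).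
- rewrite hE; field; rewrite ?pnatr_eq0 //.
- exact: (pair_ev _ _ _ _ _ _ ea eb).
- exact: (pair_ev _ _ _ _ _ _ ea eg).
- exact: (pair_ev _ _ _ _ _ _ eb eg).
Qed.

Definition Efn (a b l0 l1 l2 l3 : K) :=
  l0 * l1 * l2 * l3 + (a-b)/6%:R*(l0^+3 + l1^+3 + l2^+3 + l3^+3)
   + (a*b)/2%:R*(l0^+2 + l1^+2 + l2^+2 + l3^+2) + (a*b)^+2.

Lemma scalar4 (l0 l1 l2 l3 a b : K) :
  l0 + l1 + l2 + l3 = 0 ->
  let t2 := l0^+2 + l1^+2 + l2^+2 + l3^+2 in
  let t3 := l0^+3 + l1^+3 + l2^+3 + l3^+3 in
  ev a b t2 t3 l0 = 0 -> ev a b t2 t3 l1 = 0 ->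
  ev a b t2 t3 l2 = 0 -> ev a b t2 t3 l3 = 0 ->
  Efn a b l0 l1 l2 l3 = 0 \/ Efn a b l0 l1 l2 l3 = (a*b)^+2 \/
  exists l, (l = l0 \/ l = l1 \/ l = l2 \/ l = l3) /\
     Efn a b l0 l1 l2 l3 = (2%:R* l*(l+(a-b)/2%:R))^+2.
Proof.
move=> hs t2 t3 e0 e1 e2 e3.
have fin : forall al, (al = l0 \/ al = l1 \/ al = l2 \/ al = l3) ->
   Efn a b l0 l1 l2 l3 = 0 \/ Efn a b l0 l1 l2 l3 = (a*b)^+2 \/ Efn a b l0 l1 l2 l3 = (2%:R*al*(al+(a-b)/2%:R))^+2 ->
   Efn a b l0 l1 l2 l3 = 0 \/ Efn a b l0 l1 l2 l3 = (a*b)^+2 \/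
  exists l, (l = l0 \/ l = l1 \/ l = l2 \/ l = l3) /\
     Efn a b l0 l1 l2 l3 = (2%:R* l*(l+(a-b)/2%:R))^+2.
  move=> al hal [->|[->|->]]; [by left|by right;left|by right;right;exists al].
have [e01|n01] := eqVneq l0 l1.
  apply: (fin l0); first by left.
  apply: (@core4 l0 l2 l3 a b t2 t3) => //.
  - by rewrite -[RHS]hs e01; ring.
  - by rewrite /t2 e01; ring.
  - by rewrite /t3 e01; ring.
  - by rewrite /Efn /t2 /t3 e01; ring.
have [e02|n02] := eqVneq l0 l2.
  apply: (fin l0); first by left.
  apply: (@core4 l0 l1 l3 a b t2 t3) => //.
  - by rewrite -[RHS]hs e02; ring.
  - by rewrite /t2 e02; ring.
  - by rewrite /t3 e02; ring.
  - by rewrite /Efn /t2 /t3 e02; ring.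
have [e03|n03] := eqVneq l0 l3.
  apply: (fin l0); first by left.
  apply: (@core4 l0 l1 l2 a b t2 t3) => //.
  - by rewrite -[RHS]hs e03; ring.
  - by rewrite /t2 e03; ring.
  - by rewrite /t3 e03; ring.
  - by rewrite /Efn /t2 /t3 e03; ring.
have [e12|n12] := eqVneq l1 l2.
  apply: (fin l1); first by right; left.
  apply: (@core4 l1 l0 l3 a b t2 t3) => //.
  - by rewrite -[RHS]hs e12; ring.
  - by rewrite /t2 e12; ring.
  - by rewrite /t3 e12; ring.
  - by rewrite /Efn /t2 /t3 e12; ring.
have [e13|n13] := eqVneq l1 l3.
  apply: (fin l1); first by right; left.
  apply: (@core4 l1 l0 l2 a b t2 t3) => //.
  - by rewrite -[RHS]hs e13; ring.
  - by rewrite /t2 e13; ring.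
  - by rewrite /t3 e13; ring.
  - by rewrite /Efn /t2 /t3 e13; ring.
have [e23|n23] := eqVneq l2 l3.
  apply: (fin l2); first by right; right; left.
  apply: (@core4 l2 l0 l1 a b t2 t3) => //.
  - by rewrite -[RHS]hs e23; ring.
  - by rewrite /t2 e23; ring.
  - by rewrite /t3 e23; ring.
  - by rewrite /Efn /t2 /t3 e23; ring.
exfalso.
set c := (a-b)/2%:R; set sg := a*b + t2/2%:R.
have q01 : qf c sg l0 l1 = 0 by case: (pair_ev _ _ _ _ _ _ e0 e1) => // /eqP; rewrite (negbTE n01).
have q02 : qf c sg l0 l2 = 0 by case: (pair_ev _ _ _ _ _ _ e0 e2) => // /eqP; rewrite (negbTE n02).
have q03 : qf c sg l0 l3 = 0 by case: (pair_ev _ _ _ _ _ _ e0 e3) => // /eqP; rewrite (negbTE n03).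
have h1 : (l1 - l2) * (l0 + l1 + l2 - c) = 0.
  by rewrite -[RHS](subrr 0) -{1}q01 -q02 /qf; ring.
have h2 : (l1 - l3) * (l0 + l1 + l3 - c) = 0.
  by rewrite -[RHS](subrr 0) -{1}q01 -q03 /qf; ring.
move/eqP: h1; rewrite mulf_eq0 subr_eq0 (negbTE n12) /= => /eqP h1.
move/eqP: h2; rewrite mulf_eq0 subr_eq0 (negbTE n13) /= => /eqP h2.
have : l2 - l3 = (l0 + l1 + l2 - c) - (l0 + l1 + l3 - c) by ring.
by rewrite h1 h2 subrr => /eqP; rewrite subr_eq0 (negbTE n23).
Qed.
End Core.
Section Conj.
Variables (K : fieldType) (P : 'M[K]_4).
Hypothesis Pu : P \in unitmx.
Definition gc (X : 'M[K]_4) := invmx P *m X *m P.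
Lemma gcM X Y : gc (X *m Y) = gc X *m gc Y.
Proof. by rewrite /gc !mulmxA (mulmxK Pu). Qed.
Lemma gcX X n : gc (X ^+ n) = gc X ^+ n.
Proof.
elim: n => [|n IH]; first by rewrite !expr0 /gc mulmx1 mulVmx.
by rewrite !exprS -!mulmxE gcM IH.
Qed.
Lemma gctr X : \tr (gc X) = \tr X.
Proof. by rewrite /gc mxtrace_mulC mulmxA mulmxV // mul1mx. Qed.
Lemma gcD X Y : gc (X + Y) = gc X + gc Y.
Proof. by rewrite /gc mulmxDr mulmxDl. Qed.
Lemma gcN X : gc (- X) = - gc X.
Proof. by rewrite /gc mulmxN mulNmx. Qed.
Lemma gcB X Y : gc (X - Y) = gc X - gc Y.
Proof. by rewrite gcD gcN. Qed.
Lemma gcZ k X : gc (k *: X) = k *: gc X.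
Proof. by rewrite /gc -scalemxAr -scalemxAl. Qed.
Lemma gcS k : gc k%:M = k%:M.
Proof. by rewrite /gc mul_mx_scalar -scalemxAl mulVmx // scalemx1. Qed.
Lemma Rmat_gc X a b : Rmat (gc X) a b = gc (Rmat X a b).
Proof.
rewrite /Rmat /tf -!gcX !gctr.
by rewrite !(gcD, gcN, gcB, gcZ, gcS).
Qed.
Lemma rval_gc X a b : rval (gc X) a b = rval X a b.
Proof.
rewrite /rval -!gcX !gctr; congr (_ * _); do 3 congr (_ + _).
rewrite /gc !det_mulmx mulrC mulrA -det_mulmx mulmxV // det1 mul1r //.
Qed.
End Conj.
Section Diag.
Variable K : fieldType.
Definition o0 : 'I_4 := @Ordinal 4 0 isT.
Definition o1 : 'I_4 := @Ordinal 4 1 isT.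
Definition o2 : 'I_4 := @Ordinal 4 2 isT.
Definition o3 : 'I_4 := @Ordinal 4 3 isT.

Lemma sum4 (G : 'I_4 -> K) : \sum_j G j = G o0 + G o1 + G o2 + G o3.
Proof.
rewrite !big_ord_recl big_ord0 addr0 !addrA.
by congr (_ + _ + _ + _); congr G; apply/val_inj.
Qed.
Lemma prod4 (G : 'I_4 -> K) : \prod_j G j = G o0 * G o1 * G o2 * G o3.
Proof.
rewrite !big_ord_recl big_ord0 mulr1 !mulrA.
by congr (_ * _ * _ * _); congr G; apply/val_inj.
Qed.

Variable d : 'rV[K]_4.
Lemma diagX n : diag_mx d ^+ n = diag_mx (\row_j (d 0 j ^+ n)).
Proof.
elim: n => [|n IH].
  rewrite expr0; apply/matrixP => i j; rewrite !mxE expr0 //.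
by rewrite exprS IH -mulmxE mulmx_diag; congr diag_mx; apply/rowP => j; rewrite !mxE exprS.
Qed.
Lemma trdiagX n : \tr (diag_mx d ^+ n) = \sum_j d 0 j ^+ n.
Proof. by rewrite diagX mxtrace_diag; apply: eq_bigr => j _; rewrite mxE. Qed.

Lemma Rmat_diag_entry a b i : (Rmat (diag_mx d) a b) i i =
  - (d 0 i ^+ 3 - \tr (diag_mx d ^+ 3) / 4%:R)
  + (a - b) / 2%:R * (d 0 i ^+ 2 - \tr (diag_mx d ^+ 2) / 4%:R)
  + (a * b + \tr (diag_mx d ^+ 2) / 2%:R) * d 0 i.
Proof.
rewrite /Rmat /tf !diagX !mxE !eqxx !mulr1n.
by rewrite -!diagX.
Qed.
End Diag.

Theorem mainTheorem6 (F : rcfType) (Q : 'M[F]_4) (a b : F) :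
  sym_tracefree Q -> Rmat Q a b = 0 -> 0 <= rval Q a b.
Proof.
move=> [Qs Qt] HR.
pose f := real_complex F.
pose QC := map_mx f Q.
have herm : QC \is hermsymmx.
  apply: realsym_hermsym.
    apply/is_hermitianmxP; rewrite expr0 scale1r map_mx_id //.
    by rewrite /QC map_trmx Qs.
  by apply/mxOverP => i j; rewrite mxE; apply/complex_realP; exists (Q i j).
have /orthomx_spectralP QCeq := hermitian_normalmx herm.
move: QCeq; set P := spectralmx QC; set d := spectral_diag QC => QCeq.
have Pu : P \in unitmx := spectral_unit QC.
have dreal : forall j, d 0 j \is Num.real.
  by move=> j; apply: (mxOverP (hermitian_spectral_diag_real herm)).
have mX : forall n, map_mx f (Q ^+ n) = (map_mx f Q) ^+ n.
  move=> n; elim: n => [|n IH]; first by rewrite !expr0 map_mx1.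
  by rewrite !exprS -!mulmxE map_mxM IH.
have HRC : Rmat QC (f a) (f b) = 0.
  have -> : Rmat QC (f a) (f b) = map_mx f (Rmat Q a b).
    rewrite /Rmat /tf /QC -!mX !trace_map_mx.
    apply/matrixP => i j; rewrite !mxE /f.
    by rewrite !(rmorph_nat, fmorphV, rmorphM, rmorphB, rmorphN, rmorphMn, rmorphD).
  by apply/eqP; rewrite map_mx_eq0; apply/eqP; exact: HR.
have HRD : Rmat (diag_mx d) (f a) (f b) = 0.
  move: HRC; rewrite QCeq -/(gc _ P (diag_mx d)) (Rmat_gc _ _ Pu) /gc => H.
  have := congr1 (fun X => P *m X *m invmx P) H.
  by rewrite /= mulmx0 mul0mx !mulmxA mulmxV // mul1mx (mulmxK Pu).
have key : f (rval Q a b) = rval (diag_mx d) (f a) (f b).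
  rewrite -(rval_gc _ _ Pu (diag_mx d)) /gc -QCeq.
  rewrite /rval /QC -!mX !trace_map_mx det_map_mx /f.
  by rewrite !(rmorph_nat, fmorphV, rmorphXn, rmorphM, rmorphB, rmorphN, rmorphD).
have tr0 : d 0 o0 + d 0 o1 + d 0 o2 + d 0 o3 = 0.
  have : \tr QC = 0 by rewrite /QC trace_map_mx Qt rmorph0.
  by rewrite QCeq -/(gc _ P (diag_mx d)) (gctr _ _ Pu) mxtrace_diag sum4.
have evi : forall i, @ev _ (f a) (f b)
   (d 0 o0 ^+ 2 + d 0 o1 ^+ 2 + d 0 o2 ^+ 2 + d 0 o3 ^+ 2)
   (d 0 o0 ^+ 3 + d 0 o1 ^+ 3 + d 0 o2 ^+ 3 + d 0 o3 ^+ 3) (d 0 i) = 0.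
  move=> i; rewrite /ev; have := congr1 (fun X : 'M[F[i]]_4 => X i i) HRD.
  by rewrite /= Rmat_diag_entry !trdiagX !sum4 mxE.
have rvE : rval (diag_mx d) (f a) (f b) =
   @Efn _ (f a) (f b) (d 0 o0) (d 0 o1) (d 0 o2) (d 0 o3) / 4%:R.
  by rewrite /rval det_diag prod4 !trdiagX !sum4.
have realf : forall x, f x \is Num.real by move=> x; apply/complex_realP; exists x.
have H : 0 <= f (rval Q a b).
  rewrite key rvE; apply: divr_ge0; last by rewrite ler0n.
  have := @scalar4 _ _ _ _ _ (f a) (f b) tr0 (evi o0) (evi o1) (evi o2) (evi o3).
  move=> [->|[->|[l [hl ->]]]] //.
    by rewrite -realEsqr rpredM.
  have rl : l \is Num.real by case: hl => [->|[->|[->|->]]].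
  rewrite -realEsqr; apply: rpredM.
    by apply: rpredM => //; apply: rpred_nat.
  apply: rpredD => //; apply: rpredM; first by apply: rpredB.
  by rewrite rpredV; apply: rpred_nat.
by move: H; rewrite ler0c.
Qed.
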